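(* Let $K$ be a field (of any characteristic), let $1\le n\le d$, let $X=\{x_1,\dots,x_n\}$, and let $A\subset K$ be a set with $|A|=d$ (distinct elements). Let $f=\prod_{a\in A}(x-a)=x^d+f_{d-1}x^{d-1}+\cdots+f_0\in K[x]$ and let $G=\{g_1(x_1),g_2(x_1,x_2),\dots,g_n(x_1,\dots,x_n)\}$ where $g_i=\sum_{k=i-1}^{d}f_k\,h^{(i)}_{k-i+1}$ (with $f_d=1$). Let $V_n(A)=\{(a_1,\dots,a_n)\in A^n: a_i\ne a_j \text{ for } i\ne j\}$ and let $I\subset K[X]$ be the ideal of polynomials vanishing on $V_n(A)$. Then: (1) $G$ is a Gröbner basis of $I$ with respect to the lexicographic order $\prec$ on $K[X]$ with $x_1\prec x_2\prec\cdots\prec x_n$, and the normal set of $K[X]/I$ with respect to $\prec$ is $B=\{x_1^{k_1}\cdots x_n^{k_n}: 0\le k_1\le d-1,\ \dots,\ 0\le k_n\le d-n\}$ (i.e. $0\le k_i\le d-i$), which gives a basis of $K[X]/I$. (2) For every symmetric polynomial $h\in K[X]$, $r_A(h)=r_G(h)$, where $r_G(h)$ denotes the normal form of $h$ modulo $G$ with respect to $\prec$ and $r_A(h)$ is the symmetric Lagrange interpolant of $h$ with respect to $A$.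
   Context: $h^{(i)}_j=\sum_{k_1+\cdots+k_i=j}x_1^{k_1}\cdots x_i^{k_i}$ is the complete homogeneous symmetric polynomial of degree $j$ in $x_1,\dots,x_i$. $S_{d-n}[X]$ denotes the space of symmetric polynomials in $K[X]$ with degree in each variable $\le d-n$. For a symmetric $h\in K[X]$, the symmetric Lagrange interpolant is $$r_A(h)=\sum_{A'\subset_n A} h(A')\,\frac{\prod_{x\in X,\,a'\in A\setminus A'}(x-a')}{\prod_{a\in A',\,a'\in A\setminus A'}(a-a')},$$ the unique element of $S_{d-n}[X]$ with $r_A(h)(A')=h(A')$ for every $n$-element subset $A'\subset A$ (here $A'\subset_n A$ means $A'$ is an $n$-element subset and evaluation at $A'$ is in any order). *)

(* Defs.v *)
From HB Require Import structures.
From mathcomp Require Import all_boot all_order all_algebra.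
From mathcomp Require Import mpoly.
Set Implicit Arguments. Unset Strict Implicit. Unset Printing Implicit Defensive.
Import Order.TTheory GRing.Theory.
Local Open Scope ring_scope.

(* Variables x_1,...,x_n are 'X_0,...,'X_(n-1) (0-based indices). *)

Section Defs.
Variables (K : fieldType) (n : nat).

(* Lexicographic order with x_1 < x_2 < ... < x_n: compare exponents of the
   largest variable x_n first. m <lex m' iff at the largest index where they
   differ, m has the smaller exponent. *)
Definition lexlt (m m' : 'X_{1..n}) : bool :=
  [exists i : 'I_n, (m i < m' i)%N &&
     [forall j : 'I_n, (i < j)%N ==> (m j == m' j)]].

Definition lexle (m m' : 'X_{1..n}) : bool := (m == m') || lexlt m m'.

(* leading monomial w.r.t. lex (meaningful for p != 0) *)
Definition lexlead (p : {mpoly K[n]}) : 'X_{1..n} :=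
  foldr (fun m acc => if lexle acc m then m else acc) 0%MM (msupp p).

Definition mdivides (m m' : 'X_{1..n}) : bool := [forall i, (m i <= m' i)%N].

Definition in_ideal (k : nat) (G : 'I_k -> {mpoly K[n]}) (p : {mpoly K[n]}) : Prop :=
  exists c : 'I_k -> {mpoly K[n]}, p = \sum_(i < k) c i * G i.

Definition groebner_basis (k : nat) (G : 'I_k -> {mpoly K[n]})
    (I : {mpoly K[n]} -> Prop) : Prop :=
  (forall i, I (G i)) /\
  (forall p, I p -> p != 0 -> exists i, mdivides (lexlead (G i)) (lexlead p)).

Definition in_normal_set (I : {mpoly K[n]} -> Prop) (m : 'X_{1..n}) : Prop :=
  ~ (exists p, I p /\ p != 0 /\ lexlead p = m).

Definition is_normal_form (k : nat) (G : 'I_k -> {mpoly K[n]})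
    (h r : {mpoly K[n]}) : Prop :=
  in_ideal G (h - r) /\
  (forall m, m \in msupp r -> forall i, ~~ mdivides (lexlead (G i)) m).

Definition hcomp (i j : nat) : {mpoly K[n]} :=
  \sum_(m : 'X_{1..n < j.+1} |
          (mdeg (val m) == j) && [forall k : 'I_n, (i <= k)%N ==> ((val m) k == 0%N)])
    'X_[val m].

Definition fpoly (A : seq K) : {poly K} := \prod_(a <- A) ('X - a%:P).

(* g_i (paper index i = i0 + 1), with d = size A:
   g_i = sum_{k = i-1}^{d} f_k h^{(i)}_{k-i+1} *)
Definition gpoly (A : seq K) (i0 : 'I_n) : {mpoly K[n]} :=
  \sum_(i0 <= k < (size A).+1) (fpoly A)`_k *: hcomp i0.+1 (k - i0).

Definition in_Vn (A : seq K) (a : 'I_n -> K) : Prop :=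
  (forall i, a i \in A) /\ injective a.

Definition vanishing_ideal (A : seq K) (p : {mpoly K[n]}) : Prop :=
  forall a, in_Vn A a -> p.@[a] = 0.

(* monomials of B: exponent of x_i at most d - i (0-based: k_{i0} <= d-1-i0) *)
Definition inB (d : nat) (m : 'X_{1..n}) : bool :=
  [forall i : 'I_n, (m i <= d - i.+1)%N].

(* symmetric Lagrange interpolant r_A(h); n-subsets A' of A are given by
   n-subsets S of the index set 'I_(size A); h(A') is evaluation at the
   elements of A' listed in enum order (order is irrelevant for symmetric h) *)
Definition subset_pt (A : seq K) (S : {set 'I_(size A)}) : 'I_n -> K :=
  fun i => nth (0 : K) [seq nth (0 : K) A j | j : 'I_(size A) <- enum S] i.

Definition lagrange_num (A : seq K) (S : {set 'I_(size A)}) : {mpoly K[n]} :=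
  \prod_(i < n) \prod_(j in ~: S) ('X_i - (nth 0 A j)%:MP).

Definition lagrange_den (A : seq K) (S : {set 'I_(size A)}) : K :=
  \prod_(j in S) \prod_(j' in ~: S) (nth 0 A j - nth 0 A j').

Definition rA (A : seq K) (h : {mpoly K[n]}) : {mpoly K[n]} :=
  \sum_(S : {set 'I_(size A)} | #|S| == n)
     (h.@[subset_pt S] / lagrange_den S) *: lagrange_num S.

End Defs.

(* Main.v *)
Require Import Defs.
From HB Require Import structures.
From mathcomp Require Import all_boot all_order all_algebra.
From mathcomp Require Import mpoly.
From mathcomp Require Import zify ring.
From mathcomp Require Import fingroup perm.
Import GRing.Theory.
Local Open Scope ring_scope.
Set Implicit Arguments. Unset Strict Implicit. Unset Printing Implicit Defensive.

Section Lex.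
Variable n : nat.
Implicit Types m : 'X_{1..n}.

Lemma lexltP m m' : reflect (exists i : 'I_n, (m i < m' i)%N /\ forall j : 'I_n, (i < j)%N -> m j = m' j) (lexlt m m').
Proof.
apply: (iffP existsP) => [[i /andP [lt /forallP h]] | [i [lt h]]]; exists i.
  by split=> // j ij; move: (h j); rewrite ij => /eqP.
by rewrite lt /=; apply/forallP => j; apply/implyP => ij; rewrite h.
Qed.

Lemma lexlt_irr m : ~~ lexlt m m.
Proof. by apply/lexltP => -[i [lt _]]; rewrite ltnn in lt. Qed.

Lemma lexlt_trans m1 m2 m3 : lexlt m1 m2 -> lexlt m2 m3 -> lexlt m1 m3.
Proof.
move=> /lexltP [i [lti hi]] /lexltP [j [ltj hj]]; apply/lexltP.
case: (ltngtP i j) => ij.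
- exists j; split; first by rewrite hi.
  by move=> k jk; rewrite hi ?hj //; apply: ltn_trans jk.
- exists i; split; first by rewrite -hj.
  by move=> k ik; rewrite hi ?hj //; apply: ltn_trans ik.
- have eij : i = j by apply: val_inj.
  subst j; exists i; split; first exact: ltn_trans ltj.
  by move=> k ik; rewrite hi ?hj.
Qed.

Lemma lexlt_total m m' : m != m' -> lexlt m m' || lexlt m' m.
Proof.
move=> ne.
have [i0 hi0] : exists i, m i != m' i.
  apply/existsP; apply: contraR ne; rewrite negb_exists => /forallP h.
  by apply/eqP/mnmP => i; move: (h i); rewrite negbK => /eqP.
case: (@arg_maxnP _ i0 (fun i : 'I_n => m i != m' i) (fun i : 'I_n => (i : nat)) hi0) => i hi hmax.
have hj : forall j : 'I_n, (i < j)%N -> m j = m' j.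
  move=> j ij; apply/eqP; apply: contraTT ij => hj.
  by rewrite -leqNgt; apply: hmax.
case: (ltngtP (m i) (m' i)) => c.
- by apply/orP; left; apply/lexltP; exists i.
- by apply/orP; right; apply/lexltP; exists i; split=> // j ij; rewrite hj.
- by rewrite c eqxx in hi.
Qed.

Lemma lexle_refl m : lexle m m.
Proof. by rewrite /lexle eqxx. Qed.

Lemma lexle_trans m1 m2 m3 : lexle m1 m2 -> lexle m2 m3 -> lexle m1 m3.
Proof.
rewrite /lexle => /orP [/eqP -> //| h12] /orP [/eqP <- |h23]; first by rewrite h12 orbT.
by rewrite (lexlt_trans h12 h23) orbT.
Qed.

Lemma lexle_total m m' : lexle m m' || lexle m' m.
Proof.
rewrite /lexle; case: (eqVneq m m') => //= ne.
by case/orP: (lexlt_total ne) => ->; rewrite ?orbT.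
Qed.

Lemma lexle_anti m m' : lexle m m' -> lexle m' m -> m = m'.
Proof.
rewrite /lexle => /orP [/eqP //|h1] /orP [/eqP -> //|h2].
by move: (lexlt_trans h1 h2); rewrite (negbTE (lexlt_irr _)).
Qed.

Lemma lexlt_le m m' : lexlt m m' -> lexle m m'.
Proof. by rewrite /lexle => ->; rewrite orbT. Qed.

Lemma lexle0 m : lexle 0%MM m.
Proof.
rewrite /lexle; case: (eqVneq 0%MM m) => //= ne.
case/orP: (lexlt_total ne) => // /lexltP [i [lt _]].
by rewrite mnm0E in lt.
Qed.

Lemma lexlt_add u m m' : lexlt (u + m)%MM (u + m')%MM = lexlt m m'.
Proof.
apply/lexltP/lexltP => -[i [lt h]]; exists i; split.
- by move: lt; rewrite !mnmDE ltn_add2l.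
- by move=> j ij; move: (h j ij); rewrite !mnmDE => /eqP; rewrite eqn_add2l => /eqP.
- by rewrite !mnmDE ltn_add2l.
- by move=> j ij; rewrite !mnmDE h.
Qed.

Lemma lexle_add u m m' : lexle (u + m)%MM (u + m')%MM = lexle m m'.
Proof. by rewrite /lexle lexlt_add eqm_add2l. Qed.

End Lex.

Section Lead.
Variables (K : fieldType) (n : nat).
Implicit Types (p q : {mpoly K[n]}) (m : 'X_{1..n}).

Definition is_lead p m := m \in msupp p /\ forall m', m' \in msupp p -> lexle m' m.

Lemma foldr_lead (s : seq 'X_{1..n}) :
  let F := foldr (fun m acc => if lexle acc m then m else acc) 0%MM s in
  (s != [::] -> F \in s) /\ forall m, m \in s -> lexle m F.
Proof.
elim: s => [|x s [IH1 IH2]] //=.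
case: ifP => h.
  split; first by rewrite inE eqxx.
  move=> m; rewrite inE => /orP [/eqP ->|ms]; first exact: lexle_refl.
  exact: lexle_trans (IH2 _ ms) h.
have hx : lexle x (foldr (fun m acc => if lexle acc m then m else acc) 0%MM s).
  by move: (lexle_total x (foldr (fun m acc => if lexle acc m then m else acc) 0%MM s)); rewrite h orbF.
split.
  move=> _; case: s IH1 IH2 h hx => [|y s] IH1 IH2 h hx.
    by rewrite /= lexle0 in h.
  by rewrite inE IH1 ?orbT.
move=> m; rewrite inE => /orP [/eqP ->|ms] //.
exact: IH2.
Qed.

Lemma lexlead_spec p : p != 0 -> is_lead p (lexlead p).
Proof.
move=> p0; have [h1 h2] := foldr_lead (msupp p); split; last exact: h2.
apply: h1; by rewrite msupp_eq0.
Qed.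

Lemma is_lead_uniq p m1 m2 : is_lead p m1 -> is_lead p m2 -> m1 = m2.
Proof. by move=> [a1 b1] [a2 b2]; apply: lexle_anti; [apply: b2|apply: b1]. Qed.

Lemma is_lead_lexlead p m : is_lead p m -> lexlead p = m.
Proof.
move=> h; have p0 : p != 0.
  by apply: contraTneq h.1 => ->; rewrite msupp0.
exact: is_lead_uniq (lexlead_spec p0) h.
Qed.

End Lead.

Section Supp.
Variables (K : fieldType) (n : nat).
Implicit Types (p q : {mpoly K[n]}) (m : 'X_{1..n}).

Definition supp_in (P : 'X_{1..n} -> Prop) p := forall m, m \in msupp p -> P m.

Lemma supp_in0 P : supp_in P 0.
Proof. by move=> m; rewrite msupp0. Qed.

Lemma supp_inD P p q : supp_in P p -> supp_in P q -> supp_in P (p + q).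
Proof. by move=> hp hq m /msuppD_le; rewrite mem_cat => /orP [/hp|/hq]. Qed.

Lemma supp_inB P p q : supp_in P p -> supp_in P q -> supp_in P (p - q).
Proof. by move=> hp hq m /msuppB_le; rewrite mem_cat => /orP [/hp|/hq]. Qed.

Lemma supp_inZ P c p : supp_in P p -> supp_in P (c *: p).
Proof. by move=> hp m /msuppZ_le /hp. Qed.

Lemma supp_inX (P : 'X_{1..n} -> Prop) m : P m -> supp_in P 'X_[m].
Proof. by move=> h m'; rewrite msuppX inE => /eqP ->. Qed.

Lemma supp_in_mono (P Q : 'X_{1..n} -> Prop) p :
  (forall m, P m -> Q m) -> supp_in P p -> supp_in Q p.
Proof. by move=> h hp m /hp /h. Qed.

Lemma supp_in_sum P (I : Type) (r : seq I) (Pr : pred I) (F : I -> {mpoly K[n]}) :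
  (forall i, Pr i -> supp_in P (F i)) -> supp_in P (\sum_(i <- r | Pr i) F i).
Proof.
move=> h; apply: (big_ind (supp_in P)); [exact: supp_in0| |exact: h].
by move=> x y; apply: supp_inD.
Qed.

Lemma supp_in_coef P p m : supp_in P p -> p@_m != 0 -> P m.
Proof. by move=> h nz; apply: h; rewrite mcoeff_msupp. Qed.



Lemma supp_in_coef0 (P : pred 'X_{1..n}) p m : supp_in P p -> ~~ P m -> p@_m = 0.
Proof.
move=> h np; case: (eqVneq (p@_m) 0) => // nz.
by move: np; rewrite (h m) // mcoeff_msupp.
Qed.

Definition mkp (b : nat) (E : 'X_{1..n} -> K) : {mpoly K[n]} :=
  \sum_(w : 'X_{1..n < b}) E w *: 'X_[w].

Lemma mkpE b E : (forall m, (b <= mdeg m)%N -> E m = 0) ->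
  forall m, (mkp b E)@_m = E m.
Proof.
move=> hE m; case: (ltnP (mdeg m) b) => h; first exact: mcoeff_mpoly.
rewrite hE // /mkp raddf_sum big1 // => w _ /=; rewrite mcoeffZ mcoeffX.
case: eqP => [e|]; last by rewrite mulr0.
by move: (bmdeg w) h; rewrite e => a b'; move: (leq_trans a b'); rewrite ltnn.
Qed.

End Supp.

Section Ideal.
Variables (K : fieldType) (n k : nat) (G : 'I_k -> {mpoly K[n]}).
Implicit Types (p q : {mpoly K[n]}).

Lemma in_ideal0 : in_ideal G 0.
Proof. by exists (fun _ => 0); rewrite big1 // => i _; rewrite mul0r. Qed.

Lemma in_idealD p q : in_ideal G p -> in_ideal G q -> in_ideal G (p + q).
Proof.
move=> [c1 ->] [c2 ->]; exists (fun i => c1 i + c2 i).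
by rewrite -big_split /=; apply: eq_bigr => i _; rewrite mulrDl.
Qed.

Lemma in_idealZ c p : in_ideal G p -> in_ideal G (c *: p).
Proof.
move=> [c1 ->]; exists (fun i => c *: c1 i).
by rewrite scaler_sumr; apply: eq_bigr => i _; rewrite scalerAl.
Qed.

Lemma in_idealN p : in_ideal G p -> in_ideal G (- p).
Proof. by move=> h; rewrite -scaleN1r; apply: in_idealZ. Qed.

Lemma in_idealB p q : in_ideal G p -> in_ideal G q -> in_ideal G (p - q).
Proof. by move=> hp hq; apply: in_idealD => //; apply: in_idealN. Qed.

Lemma in_ideal_gen q i : in_ideal G (q * G i).
Proof.
exists (fun j => if j == i then q else 0).
rewrite (bigD1 i) //= eqxx big1 ?addr0 // => j /negbTE ->; by rewrite mul0r.
Qed.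

Lemma in_ideal_sum (I : Type) (r : seq I) (P : pred I) (F : I -> {mpoly K[n]}) :
  (forall i, P i -> in_ideal G (F i)) -> in_ideal G (\sum_(i <- r | P i) F i).
Proof.
move=> h; apply: (big_ind (in_ideal G)); [exact: in_ideal0| |exact: h].
by move=> x y; apply: in_idealD.
Qed.

End Ideal.

Lemma big_nat_pick (K : fieldType) (F : nat -> K) a b c :
  \sum_(a <= k < b) F k * (k == c)%:R = if (a <= c < b)%N then F c else 0.
Proof.
elim: b => [|b IH]; first by rewrite big_geq // ltn0 andbF.
case: (leqP a b) => ab.
  rewrite big_nat_recr //= IH; case: (eqVneq b c) => [<-|bc].
    by rewrite mulr1 ltnn andbF add0r ab leqnn.
  rewrite mulr0 addr0; have -> : (a <= c < b.+1)%N = (a <= c < b)%N.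
    by rewrite ltnS [(c <= b)%N]leq_eqVlt (eq_sym c) (negbTE bc).
  by [].
rewrite big_geq //; case: ifP => //; lia.
Qed.

Lemma eq_sub_add_nat (x k i : nat) : (i <= k)%N -> (x == k - i)%N = (k == x + i)%N.
Proof. by move=> h; apply/idP/idP => /eqP e; apply/eqP; lia. Qed.

Section G.
Variables (K : fieldType) (n : nat) (A : seq K).
Local Notation d := (size A).
Local Notation f := (fpoly A).
Implicit Types (m w u : 'X_{1..n}).

Lemma size_f : size f = d.+1.
Proof. by rewrite /fpoly size_prod_XsubC. Qed.

Lemma f_lead : f`_d = 1.
Proof.
have /monicP := monic_prod_XsubC A xpredT (fun x => x).
by rewrite lead_coefE -/(fpoly A) size_f.
Qed.

Lemma f_root a : a \in A -> f.[a] = 0.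
Proof. by move=> h; apply/rootP; rewrite root_prod_XsubC. Qed.

Definition hcond (i j : nat) m :=
  (mdeg m == j) && [forall k : 'I_n, (i <= k)%N ==> (m k == 0%N)].

Lemma hcompE i j m : (hcomp K n i j)@_m = (hcond i j m)%:R.
Proof.
have -> : hcomp K n i j = mkp j.+1 (fun m => (hcond i j m)%:R).
  rewrite /hcomp /mkp big_mkcond /=; apply: eq_bigr => w _.
  by rewrite /hcond; case: ifP => _; rewrite ?scale1r ?scale0r.
apply: mkpE => m' h; rewrite /hcond; case: eqP => //= e.
by rewrite e ltnn in h.
Qed.

Definition vcond (i : nat) m := [forall k : 'I_n, (i < k)%N ==> (m k == 0%N)].

Lemma gpolyE (i : 'I_n) m : (gpoly A i)@_m = (vcond i m)%:R * f`_(mdeg m + i).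
Proof.
rewrite /gpoly raddf_sum.
transitivity (\sum_(i <= k < d.+1) f`_k * (k == mdeg m + i)%:R * (vcond i m)%:R).
  rewrite big_nat_cond [RHS]big_nat_cond; apply: eq_bigr => k /andP [/andP [ik _] _] /=.
  rewrite mcoeffZ hcompE /hcond.
  have -> : (mdeg m == k - i)%N = (k == mdeg m + i)%N.
    by rewrite eq_sub_add_nat.
  rewrite -mulrA; congr (_ * _).
  by rewrite /vcond -mulnb natrM.
rewrite -big_distrl /= big_nat_pick; case: ifP => h; first by rewrite mulrC.
rewrite nth_default ?size_f ?mulr0 ?mul0r //.
by move: h; rewrite leq_addl /= => /negbT; rewrite -leqNgt.
Qed.

Lemma mdeg_split w (i : 'I_n) : (w i + \sum_(j | j != i) w j)%N = mdeg w.
Proof. by rewrite mdegE [RHS](bigD1 i). Qed.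

Lemma DU_E (i : 'I_n) D (j : 'I_n) : (U_(i) *+ D)%MM j = ((i == j) * D)%N.
Proof. by rewrite mulmnE mnm1E. Qed.

Lemma g_lead_coef (i : 'I_n) : (i <= d)%N -> (gpoly A i)@_(U_(i) *+ (d - i))%MM = 1.
Proof.
move=> id; rewrite gpolyE mdegMn mdeg1 mul1n.
have -> : vcond i (U_(i) *+ (d - i))%MM.
  apply/forallP => k; apply/implyP => ik; rewrite DU_E.
  case: (eqVneq i k) => [e|ne]; first by rewrite e ltnn in ik.
  by [].
by rewrite subnK // f_lead mul1r.
Qed.

Lemma g_supp (i : 'I_n) w : w \in msupp (gpoly A i) ->
  (forall j : 'I_n, (i < j)%N -> w j = 0%N) /\ (w i <= d - i)%N /\
  ((w i = d - i)%N -> w = (U_(i) *+ (d - i))%MM).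
Proof.
rewrite mcoeff_msupp gpolyE => nz.
case hv: (vcond i w); last by move: nz; rewrite hv /= mul0r eqxx.
have hd : (mdeg w + i <= d)%N.
  case: (leqP (mdeg w + i) d) => // h.
  by rewrite nth_default ?size_f // mulr0 eqxx in nz.
have hj : forall j : 'I_n, (i < j)%N -> w j = 0%N.
  by move=> j ij; move/forallP: hv => /(_ j); rewrite ij => /eqP.
have hs := mdeg_split w i.
split => //; split; first lia.
move=> e; apply/mnmP => j; rewrite DU_E.
case: (eqVneq i j) => [<-|ne] /=; first by rewrite mul1n e.
rewrite mul0n; have : (\sum_(j | j != i) w j = 0)%N by lia.
move/eqP; rewrite sum_nat_eq0 => /forallP /(_ j) /implyP.
by rewrite eq_sym ne => /(_ isT) /eqP.
Qed.

Lemma lead_Xg (i : 'I_n) u : (i <= d)%N ->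
  is_lead ('X_[u] * gpoly A i) (u + U_(i) *+ (d - i))%MM.
Proof.
move=> id; rewrite mpoly_mulC; split.
  by rewrite mcoeff_msupp mcoeffMX g_lead_coef // oner_neq0.
move=> w'; rewrite (perm_mem (msuppMX _ _)) => /mapP [w ws ->].
rewrite lexle_add.
have [hj [hle heq]] := g_supp ws.
case: (eqVneq (w i) (d - i)%N) => [e|ne]; first by rewrite (heq e) lexle_refl.
apply: lexlt_le; apply/lexltP; exists i; split.
  by rewrite DU_E eqxx mul1n ltn_neqAle ne hle.
move=> j ij; rewrite hj // DU_E; case: (eqVneq i j) => [e|] //.
by rewrite e ltnn in ij.
Qed.

Lemma Xg_rest_supp (i : 'I_n) : (i <= d)%N ->
  supp_in (fun w => (w i < d - i)%N /\ forall j : 'I_n, (i < j)%N -> w j = 0%N)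
    ('X_[U_(i) *+ (d - i)] - gpoly A i).
Proof.
move=> id w; rewrite mcoeff_msupp mcoeffB mcoeffX.
case: (eqVneq (U_(i) *+ (d - i))%MM w) => [<-|ne].
  by rewrite g_lead_coef // subrr eqxx.
rewrite sub0r oppr_eq0 -mcoeff_msupp => ws.
have [hj [hle heq]] := g_supp ws; split => //.
rewrite ltn_neqAle hle andbT; apply/eqP => e.
by rewrite (heq e) eqxx in ne.
Qed.

End G.

Fixpoint Hv (K : nzRingType) (r : nat) (a : nat -> K) (k : nat) {struct r} : K :=
  match r with
  | 0 => (k == 0)%N%:R
  | r'.+1 => let fix F k := match k with
                            | 0 => 1
                            | k'.+1 => Hv r' a k'.+1 + a r' * F k'
                            end in F k
  end.

Section HvTheory.
Variable K : fieldType.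
Implicit Types (a b c e : nat -> K).

Lemma HvS0 r a : Hv r.+1 a 0 = 1. Proof. by []. Qed.
Lemma HvSS r a k : Hv r.+1 a k.+1 = Hv r a k.+1 + a r * Hv r.+1 a k. Proof. by []. Qed.
Lemma Hv0 a k : Hv 0 a k = (k == 0)%N%:R. Proof. by []. Qed.

Lemma Hv_ext r a b k : (forall j, (j < r)%N -> a j = b j) -> Hv r a k = Hv r b k.
Proof.
elim: r k => [|r IH] k h //.
elim: k => [|k IHk] //; rewrite !HvSS IHk (IH k.+1) ?h //.
by move=> j jr; apply: h; apply: ltnW.
Qed.

Lemma Hv1 a k : Hv 1 a k = a 0%N ^+ k.
Proof. by elim: k => [|k IH] //; rewrite HvSS IH Hv0 add0r exprS. Qed.

Lemma Hv_dd r b c e y z k :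
  (forall j, (j < r)%N -> b j = c j) -> (forall j, (j <= r)%N -> e j = c j) ->
  b r = y -> c r = z -> e r.+1 = y ->
  (y - z) * Hv r.+2 e k = Hv r.+1 b k.+1 - Hv r.+1 c k.+1.
Proof.
move=> hbc hec hb hc he.
have Hr : forall k, Hv r b k = Hv r c k by move=> k'; apply: Hv_ext.
have Hr1 : forall k, Hv r.+1 e k = Hv r.+1 c k by move=> k'; apply: Hv_ext => j /hec.
elim: k => [|k IH].
  by rewrite HvS0 !HvSS !HvS0 Hr hb hc mulr1; ring.
rewrite HvSS Hr1 he.
rewrite [Hv r.+1 b k.+2]HvSS [Hv r.+1 c k.+2]HvSS Hr hb hc.
rewrite mulrDr mulrCA IH; ring.
Qed.

Definition Gv (f : {poly K}) (d i : nat) (e : nat -> K) :=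
  \sum_(i <= k < d.+1) f`_k * Hv i.+1 e (k - i).

Lemma Gv_dd f d i b c e y z : (i <= d)%N ->
  (forall j, (j < i)%N -> b j = c j) -> (forall j, (j <= i)%N -> e j = c j) ->
  b i = y -> c i = z -> e i.+1 = y ->
  (y - z) * Gv f d i.+1 e = Gv f d i b - Gv f d i c.
Proof.
move=> id hbc hec hb hc he.
rewrite /Gv -sumrB [X in _ = X](big_ltn (id : (i < d.+1)%N)) subnn !HvS0 subrr add0r.
rewrite mulr_sumr; apply: eq_big_nat => k /andP [ik _].
rewrite mulrCA (Hv_dd (k - i.+1) hbc hec hb hc he).
have -> : (k - i.+1).+1 = (k - i)%N by lia.
by rewrite mulrBr.
Qed.

Lemma G_van (f : {poly K}) (A : seq K) (d i : nat) :
  size f = d.+1 -> (forall x, x \in A -> f.[x] = 0) -> (i <= d)%N ->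
  forall e, (forall j, (j < i)%N -> e j \in A) ->
  (forall j j', (j < i)%N -> (j' < i)%N -> e j = e j' -> j = j') ->
  Gv f d i e * \prod_(j < i) (e i - e j) = f.[e i].
Proof.
move=> sf froot; elim: i => [|i IH] id e hA hinj.
  rewrite big_ord0 mulr1 /Gv horner_coef sf big_mkord; apply: eq_bigr => k _.
  by rewrite subn0 Hv1.
set y := e i.+1; set z := e i.
pose b := fun j => if j == i then y else e j.
have hGe : Gv f d i e = 0.
  have := IH (ltnW id) e (fun j ji => hA j (ltnW ji)).
  rewrite froot ?hA // => /(_ _) h.
  have h' := h (fun j j' ji j'i => hinj j j' (ltnW ji) (ltnW j'i)).
  move/eqP: h'; rewrite mulf_eq0 => /orP [/eqP //|].
  rewrite prodf_seq_eq0 => /hasP [j _ /andP [_]]; rewrite subr_eq0 => /eqP ej.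
  by have := hinj i j (ltnSn i) (ltnW (ltn_ord j)) ej => eij; move: (ltn_ord j); rewrite -eij ltnn.
have hGb : Gv f d i b * \prod_(j < i) (y - e j) = f.[y].
  have := IH (ltnW id) b.
  have hb : forall j, (j < i)%N -> b j = e j.
    by move=> j ji; rewrite /b; case: eqP => // ej; rewrite ej ltnn in ji.
  have -> : b i = y by rewrite /b eqxx.
  have -> : \prod_(j < i) (y - b j) = \prod_(j < i) (y - e j).
    by apply: eq_bigr => j _; rewrite hb.
  apply.
    by move=> j ji; rewrite hb // hA // ltnW.
  move=> j j' ji j'i; rewrite !hb // => ejj; apply: hinj => //; exact: ltnW.
have dd := @Gv_dd f d i b e e y z (ltnW id).
rewrite big_ord_recr /=.
have -> : forall P, Gv f d i.+1 e * (P * (y - z)) = ((y - z) * Gv f d i.+1 e) * P.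
  by move=> P; ring.
rewrite dd //; last by rewrite /b eqxx.
  by rewrite hGe subr0.
by move=> j ji; rewrite /b; case: eqP => // ej; rewrite ej ltnn in ji.
Qed.

End HvTheory.

Section HE.
Variables (K : fieldType) (n : nat).
Implicit Types (m w : 'X_{1..n}) (a : 'I_n -> K).

Definition ext a : nat -> K := fun j => if insub j is Some i then a i else 0.

Lemma extE a (i : 'I_n) : ext a i = a i.
Proof. by rewrite /ext valK. Qed.

Lemma extE' a j (h : (j < n)%N) : ext a j = a (Ordinal h).
Proof. by rewrite -[j]/(nat_of_ord (Ordinal h)) extE. Qed.

Lemma hcomp0 k : hcomp K n 0 k = ((k == 0)%N%:R)%:MP.
Proof.
apply/mpolyP => m; rewrite hcompE mcoeffC /hcond.
have -> : [forall j : 'I_n, (0 <= j)%N ==> (m j == 0%N)] = (m == 0%MM).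
  apply/forallP/eqP => [h|->].
    by apply/mnmP => j; rewrite mnm0E; move/implyP: (h j) => /(_ (leq0n _)) /eqP.
  by move=> j; rewrite mnm0E eqxx implybT.
case: (eqVneq m 0%MM) => [->|ne]; last by rewrite andbF mulr0.
by rewrite mdeg0 eq_sym andbT mulr1.
Qed.

Lemma hcompS0 r : hcomp K n r.+1 0 = 1.
Proof.
apply/mpolyP => m; rewrite hcompE mcoeff1 /hcond mdeg_eq0.
case: (eqVneq m 0%MM) => [->|] //=.
have -> // : [forall j : 'I_n, (r.+1 <= j)%N ==> ((0%MM : 'X_{1..n}) j == 0%N)].
by apply/forallP => j; rewrite mnm0E eqxx implybT.
Qed.

Lemma hcompSS (r : 'I_n) k :
  hcomp K n r.+1 k.+1 = hcomp K n r k.+1 + 'X_r * hcomp K n r.+1 k.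
Proof.
apply/mpolyP => m; rewrite mcoeffD !hcompE /hcond mpoly_mulC.
case: (posnP (m r)) => hr.
  rewrite (memN_msupp_eq0 (m := m)); last first.
    rewrite (perm_mem (msuppMX _ _)); apply/mapP => -[w _ e].
    by move: hr; rewrite e mnmDE mnm1E eqxx.
  rewrite addr0; congr ((_ && _)%:R); apply/forallP/forallP => h j; apply/implyP => hj.
    case: (eqVneq j r) => [->|ne]; first by rewrite hr.
    apply: (implyP (h j)); have ne' : (nat_of_ord j != nat_of_ord r) := ne.
    by rewrite ltn_neqAle hj andbT eq_sym.
  by apply: (implyP (h j)); apply: ltnW.
set m' := (m - U_(r))%MM.
have em : m = (U_(r) + m')%MM by rewrite addmC submK // lep1mP -lt0n hr.
have -> : (hcomp K n r.+1 k * 'X_r)@_m = (hcomp K n r.+1 k)@_m'.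
  by rewrite {1}em mcoeffMX.
rewrite hcompE /hcond.
have -> : [forall j : 'I_n, (r <= j)%N ==> (m j == 0%N)] = false.
  apply/negbTE; rewrite negb_forall; apply/existsP; exists r.
  by rewrite leqnn /= -lt0n hr.
rewrite andbF add0r.
have -> : mdeg m = (mdeg m').+1 by rewrite {1}em mdegD mdeg1.
rewrite eqSS; congr ((_ && _)%:R); apply: eq_forallb => j.
rewrite /m' mnmBE mnm1E; case: (eqVneq r j) => [<-|_]; first by rewrite ltnn.
by rewrite subn0.
Qed.

Lemma hcomp_eval a r k : (r <= n)%N -> (hcomp K n r k).@[a] = Hv r (ext a) k.
Proof.
elim: r k => [|r IH] k hr; first by rewrite hcomp0 mevalC.
elim: k => [|k IHk]; first by rewrite hcompS0 meval1.
have hr' : (r < n)%N := hr.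
have := hcompSS (Ordinal hr') k; rewrite /= => ->.
rewrite mevalD mevalM mevalXU IH ?IHk; last exact: ltnW.
by rewrite -(extE' _ hr').
Qed.

Lemma gpoly_eval (A : seq K) (i : 'I_n) a :
  (gpoly A i).@[a] = Gv (fpoly A) (size A) i (ext a).
Proof.
rewrite /gpoly /Gv raddf_sum; apply: eq_bigr => k _ /=.
by rewrite mevalZ hcomp_eval.
Qed.

Lemma G_in_I (A : seq K) (i : 'I_n) : (n <= size A)%N ->
  vanishing_ideal A (gpoly A i).
Proof.
move=> hnd a [hA hinj]; rewrite gpoly_eval.
have id : (i <= size A)%N by apply: ltnW; apply: leq_trans (ltn_ord i) hnd.
have hA' : forall j, (j < i)%N -> ext a j \in A.
  move=> j ji; have jn : (j < n)%N by apply: ltn_trans ji (ltn_ord i).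
  by rewrite (extE' _ jn).
have hinj' : forall j j', (j < i)%N -> (j' < i)%N -> ext a j = ext a j' -> j = j'.
  move=> j j' ji j'i; have jn : (j < n)%N by apply: ltn_trans ji (ltn_ord i).
  have j'n : (j' < n)%N by apply: ltn_trans j'i (ltn_ord i).
  by rewrite (extE' _ jn) (extE' _ j'n) => /hinj [].
have := G_van (size_f A) (fun x hx => f_root hx) id hA' hinj'.
rewrite extE f_root // => /eqP; rewrite mulf_eq0 => /orP [/eqP //|].
rewrite prodf_seq_eq0 => /hasP [j _ /andP [_]]; rewrite subr_eq0 => /eqP ej.
have jn : (j < n)%N by apply: ltn_trans (ltn_ord j) (ltn_ord i).
move: ej; rewrite (extE' _ jn) => /hinj /(congr1 val) /= eij.
by move: (ltn_ord j); rewrite -eij ltnn.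
Qed.

End HE.

Section Red.
Variables (K : fieldType) (n : nat) (A : seq K).
Hypothesis hnd : (n <= size A)%N.
Local Notation d := (size A).
Local Notation G := (gpoly (n:=n) A).
Implicit Types (m w u : 'X_{1..n}) (p q r : {mpoly K[n]}).

Definition Tb (v : nat) m : Prop := forall j : 'I_n, (v <= j)%N -> (m j <= d - j.+1)%N.

Lemma lin_red (P P' : 'X_{1..n} -> Prop) :
  (forall w, P' w -> exists r, supp_in P r /\ in_ideal G ('X_[w] - r)) ->
  forall p, supp_in P' p -> exists r, supp_in P r /\ in_ideal G (p - r).
Proof.
move=> h p hp.
suff: forall s, {subset s <= msupp p} ->
    exists r, supp_in P r /\ in_ideal G (\sum_(w <- s) p@_w *: 'X_[w] - r).
  move/(_ (msupp p) (fun x hx => hx)) => [r [hr hi]]; exists r; split => //.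
  by rewrite -mpolyE in hi.
elim => [|w s IH] hs.
  exists 0; split; first exact: supp_in0.
  by rewrite big_nil subr0; exact: in_ideal0.
have [r1 [h1 i1]] := IH (fun x hx => hs x (@mem_behead _ (w :: s) x hx)).
have [r2 [h2 i2]] := h w (hp w (hs w (mem_head _ _))).
exists (p@_w *: r2 + r1); split; first by apply: supp_inD => //; apply: supp_inZ.
rewrite big_cons opprD addrACA -scalerBr.
by apply: in_idealD => //; apply: in_idealZ.
Qed.

Lemma red_step (v : 'I_n) m : Tb v.+1 m ->
  exists r, supp_in (Tb v) r /\ in_ideal G ('X_[m] - r).
Proof.
have vd : (v < d)%N := leq_trans (ltn_ord v) hnd.
suff H : forall t m, m v = t -> Tb v.+1 m ->
    exists r, supp_in (Tb v) r /\ in_ideal G ('X_[m] - r).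
  by move=> hm; apply: (H (m v)).
elim/ltn_ind => t IH {}m et hm.
case: (leqP (m v) (d - v.+1)) => hv.
  exists 'X_[m]; split; last by rewrite subrr; exact: in_ideal0.
  apply: supp_inX => j vj; case: (ltngtP v j) => c.
  - exact: hm.
  - by rewrite ltnNge vj in c.
  - by have -> : j = v by apply: val_inj.
set D := (d - v)%N.
set u := (m - U_(v) *+ D)%MM.
have em : m = (u + U_(v) *+ D)%MM.
  rewrite /u submK //; apply/mnm_lepP => j; rewrite DU_E.
  case: (eqVneq v j) => [<-|_] /=; last by [].
  rewrite mul1n /D; lia.
have ->  : 'X_[m] = 'X_[u] * gpoly A v + 'X_[u] * ('X_[U_(v) *+ D] - gpoly A v).
  by rewrite mulrBr addrC subrK -mpolyXD -em.
set s := 'X_[u] * ('X_[_] - _).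
have hs : supp_in (fun w => Tb v.+1 w /\ (w v < t)%N) s.
  move=> w; rewrite /s mpoly_mulC (perm_mem (msuppMX _ _)) => /mapP [w0 w0s ->].
  have [h1 h2] := Xg_rest_supp (ltnW vd) w0s.
  split.
    move=> j vj; rewrite mnmDE h2 // addn0 /u mnmBE DU_E.
    have -> : (v == j) = false by apply/negbTE; apply: contraTneq vj => <-; rewrite ltnn.
    by rewrite mul0n subn0; apply: hm.
  rewrite mnmDE /u mnmBE DU_E eqxx mul1n -et; rewrite /D in h1 *; lia.
have [r [hr hi]] := lin_red (fun w (hw : Tb v.+1 w /\ (w v < t)%N) =>
   IH (w v) hw.2 w erefl hw.1) hs.
exists r; split => //.
rewrite -addrA; apply: in_idealD => //; exact: in_ideal_gen.
Qed.

Lemma red_all t : (t <= n)%N -> forall m,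
  exists r, supp_in (Tb (n - t)) r /\ in_ideal G ('X_[m] - r).
Proof.
elim: t => [|t IH] tn m.
  exists 'X_[m]; split; last by rewrite subrr; exact: in_ideal0.
  by apply: supp_inX => j; rewrite subn0 leqNgt ltn_ord.
have [r' [h' i']] := IH (ltnW tn) m.
have vn : (n - t.+1 < n)%N by lia.
have ev : (n - t)%N = (Ordinal vn).+1 by rewrite /=; lia.
rewrite ev in h'.
have [r [hr hi]] := lin_red (@red_step (Ordinal vn)) h'.
exists r; split => //.
have -> : 'X_[m] - r = ('X_[m] - r') + (r' - r) by rewrite addrA subrK.
exact: in_idealD.
Qed.

Lemma reduce p : exists r, supp_in (fun m => inB d m) r /\ in_ideal G (p - r).
Proof.
have h : forall w, True -> exists r, supp_in (fun m => inB d m) r /\ in_ideal G ('X_[w] - r).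
  move=> w _; have [r [hr hi]] := red_all (leqnn n) w.
  exists r; split => // m /hr; rewrite subnn => hm.
  by apply/forallP => j; apply: hm.
exact: lin_red h p (fun _ _ => I).
Qed.

End Red.

Section Z.
Variables (K : fieldType) (n : nat).
Implicit Types (m w : 'X_{1..n}) (p q : {mpoly K[n]}).

Lemma meval_indep (v : 'I_n) q (a b : 'I_n -> K) :
  supp_in (fun w => w v = 0%N) q -> (forall j, j != v -> a j = b j) -> q.@[a] = q.@[b].
Proof.
move=> hq hab; rewrite !mevalE; apply: eq_big_seq => w /hq wv; congr (_ * _).
apply: eq_bigr => j _; case: (eqVneq j v) => [->|ne]; first by rewrite wv !expr0.
by rewrite hab.
Qed.

Definition qc p (v : 'I_n) (i : nat) :=
  mkp (msize p) (fun w => if w v == 0%N then p@_(w + U_(v) *+ i)%MM else 0).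

Lemma qcE p v i w : (qc p v i)@_w = if w v == 0%N then p@_(w + U_(v) *+ i)%MM else 0.
Proof.
apply: mkpE => w' h; case: ifP => // _; apply: memN_msupp_eq0; apply: msize_mdeg_ge.
by rewrite mdegD; exact: leq_trans h (leq_addr _ _).
Qed.

Lemma qc_supp p v i : supp_in (fun w => w v = 0%N) (qc p v i).
Proof. by move=> w; rewrite mcoeff_msupp qcE; case: ifP => [/eqP //|_]; rewrite eqxx. Qed.

Lemma qc_mulX p v i w :
  ('X_[U_(v) *+ i] * qc p v i)@_w = if w v == i then p@_w else 0.
Proof.
rewrite mpoly_mulC; case: (leqP i (w v)) => h.
  have hle : (U_(v) *+ i <= w)%MM.
    by apply/mnm_lepP => j; rewrite DU_E; case: eqVneq => [<-|]; rewrite ?mul1n ?mul0n.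
  have ew : w = (U_(v) *+ i + (w - U_(v) *+ i))%MM by rewrite addmC submK.
  rewrite {1}ew mcoeffMX qcE mnmBE DU_E eqxx mul1n subn_eq0 eqn_leq h andbT.
  by rewrite submK.
rewrite memN_msupp_eq0; last first.
  rewrite (perm_mem (msuppMX _ _)); apply/mapP => -[w0 _ e].
  by move: h; rewrite e mnmDE DU_E eqxx mul1n; lia.
by rewrite ifN // neq_ltn h.
Qed.

Lemma p_decomp p v : p = \sum_(i < msize p) 'X_[U_(v) *+ i] * qc p v i.
Proof.
apply/mpolyP => w; rewrite raddf_sum /=.
transitivity (\sum_(i < msize p) p@_w * ((i : nat) == w v)%:R); last first.
  by apply: eq_bigr => i _; rewrite qc_mulX eq_sym; case: eqP; rewrite ?mulr1 ?mulr0.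
rewrite -(big_mkord xpredT (fun i => p@_w * (i == w v)%:R)) big_nat_pick leq0n /=.
case: ltnP => // h; apply: memN_msupp_eq0; apply: msize_mdeg_ge.
by rewrite -(mdeg_split w v); apply: leq_trans h (leq_addr _ _).
Qed.

Lemma p_eval p v (a : 'I_n -> K) y :
  p.@[fun j => if j == v then y else a j] = (\poly_(i < msize p) (qc p v i).@[a]).[y].
Proof.
rewrite horner_poly {1}(p_decomp p v) raddf_sum /=; apply: eq_bigr => i _.
rewrite mevalM -mpolyXn rmorphXn /= mevalXU eqxx mulrC; congr (_ * _).
by apply: (meval_indep (@qc_supp p v i)) => j /negbTE ->.
Qed.

Lemma Zmain (A : seq K) (hA : uniq A) (hnd : (n <= size A)%N) k : (k <= n)%N ->
  forall p,
  supp_in (fun w => forall j : 'I_n, (k <= j)%N -> w j = 0%N) p ->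
  (forall a : 'I_n -> K, (forall j : 'I_n, (j < k)%N -> a j \in A) ->
     (forall j j' : 'I_n, (j < k)%N -> (j' < k)%N -> a j = a j' -> j = j') ->
     p.@[a] = 0) ->
  forall m, is_lead p m -> inB (size A) m -> False.
Proof.
elim: k => [|k IH] kn p hs hv m [hm hl] hB.
  have ep : p = (p@_0%MM)%:MP.
    apply/mpolyP => w; rewrite mcoeffC.
    case: (eqVneq w 0%MM) => [->|ne]; first by rewrite mulr1.
    rewrite mulr0; apply: memN_msupp_eq0; apply/negP => /hs h.
    by move/eqP: ne; apply; apply/mnmP => j; rewrite mnm0E h.
  have h0 : p.@[fun _ => 0] = 0 by apply: hv => j; rewrite ltn0.
  rewrite ep mevalC in h0.
  by rewrite ep h0 mpolyC0 msupp0 in hm.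
have kn' : (k < n)%N := kn.
set v := Ordinal kn'.
set e := m v.
have hmax : forall w, w \in msupp p -> (w v <= e)%N.
  move=> w /hl; rewrite /lexle => /orP [/eqP -> //| /lexltP [i0 [lt hj]]].
  case: (ltngtP i0 v) => c.
  - by rewrite hj.
  - by have h := hs m hm i0 c; rewrite h in lt.
  - rewrite /e (_ : v = i0); [exact: ltnW | exact: val_inj].
have eB : (e < msize p)%N.
  apply: leq_ltn_trans (msize_mdeg_lt hm).
  by rewrite -(mdeg_split m v) leq_addr.
have hq0 : forall i, (e < i)%N -> qc p v i = 0.
  move=> i ei; apply/mpolyP => w; rewrite qcE mcoeff0; case: ifP => // /eqP wv0.
  apply: memN_msupp_eq0; apply/negP => /hmax; rewrite mnmDE wv0 DU_E eqxx mul1n add0n.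
  by rewrite leqNgt ei.
have hqv : forall a : 'I_n -> K, (forall j : 'I_n, (j < k)%N -> a j \in A) ->
    (forall j j' : 'I_n, (j < k)%N -> (j' < k)%N -> a j = a j' -> j = j') ->
    (qc p v e).@[a] = 0.
  move=> a haA hainj.
  set S := [seq ext a j | j <- iota 0 k].
  have hSk : forall x, x \in S -> exists j : 'I_n, (j < k)%N /\ x = a j.
    move=> x /mapP [j]; rewrite mem_iota add0n => /andP [_ jk] ->.
    have jn : (j < n)%N by apply: ltn_trans jk kn'.
    by exists (Ordinal jn); split => //; rewrite (extE' _ jn).
  have uS : uniq S.
    rewrite map_inj_in_uniq ?iota_uniq // => j j'; rewrite !mem_iota !add0n.
    move=> /andP [_ jk] /andP [_ j'k].
    have jn : (j < n)%N by apply: ltn_trans jk kn'.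
    have j'n : (j' < n)%N by apply: ltn_trans j'k kn'.
    rewrite (extE' _ jn) (extE' _ j'n) => /hainj.
    by move=> /(_ jk j'k) [].
  have SA : forall x, x \in S -> x \in A.
    by move=> x /hSk [j [jk ->]]; apply: haA.
  have sS : size S = k by rewrite size_map size_iota.
  set rs := [seq x <- A | x \notin S].
  have srs : size rs = (size A - k)%N.
    have hc := count_predC (mem S) A.
    have : count (mem S) A = k.
      rewrite -size_filter -sS; apply: perm_size; apply: uniq_perm.
      - exact: filter_uniq.
      - exact: uS.
      by move=> x; rewrite mem_filter; apply/andP/idP => [[]//|xS]; split => //; apply: SA.
    by move=> hk; rewrite /rs size_filter -hk -hc addKn.
  have urs : uniq rs by apply: filter_uniq.
  apply/eqP; apply: contraT => nz.
  set P := \poly_(i < msize p) (qc p v i).@[a].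
  have Pnz : P != 0.
    apply: contraNneq nz => P0; apply/eqP.
    by have := congr1 (fun q : {poly K} => q`_e) P0; rewrite /= coef_poly eB coef0.
  have sP : (size P <= e.+1)%N.
    apply/leq_sizeP => j ej; rewrite coef_poly; case: ifP => // _.
    by rewrite hq0 // meval0.
  have roots : all (root P) rs.
    apply/allP => y; rewrite mem_filter => /andP [yS yA].
    rewrite /root /P -p_eval; apply/eqP; apply: hv.
      move=> j jk; case: eqP => [_|ne] //.
      apply: haA; have : (nat_of_ord j != k).
        by apply/eqP => ej; apply: ne; apply: val_inj.
      by rewrite ltnS in jk; rewrite ltn_neqAle jk andbT.
    have lt_k : forall j : 'I_n, (j < k.+1)%N -> j != v -> (j < k)%N.
      move=> j jk ne; have : (nat_of_ord j != k).
        by apply/eqP => ej; move/eqP: ne; apply; apply: val_inj.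
      by rewrite ltnS in jk; rewrite ltn_neqAle jk andbT.
    move=> j j' jk j'k; case: (eqVneq j v) => [->|ne]; case: (eqVneq j' v) => [->|ne'] //.
    - move=> eyj; move: yS; have : y \in S.
        rewrite eyj; apply/mapP; exists (nat_of_ord j'); first by rewrite mem_iota add0n lt_k.
        by rewrite extE.
      by move=> ->.
    - move=> eyj; move: yS; have : y \in S.
        rewrite -eyj; apply/mapP; exists (nat_of_ord j); first by rewrite mem_iota add0n lt_k.
        by rewrite extE.
      by move=> ->.
    - by apply: hainj; apply: lt_k.
  have := max_poly_roots Pnz roots urs.
  rewrite srs => h; have := leq_trans h sP.
  move/forallP: hB => /(_ v) /=; rewrite -/e; lia.
set m0 := (m - U_(v) *+ e)%MM.
have em : m = (m0 + U_(v) *+ e)%MM.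
  rewrite /m0 submK //; apply/mnm_lepP => j; rewrite DU_E.
  by case: eqVneq => [<-|] //=; rewrite mul1n.
apply: (IH (ltnW kn) (qc p v e) _ hqv m0).
- move=> w; rewrite mcoeff_msupp qcE; case: ifP => [/eqP wv0|]; last by rewrite eqxx.
  rewrite -mcoeff_msupp => /hs hw j kj.
  case: (eqVneq (nat_of_ord j) k) => [ejk|ne].
    by have -> : j = v by apply: val_inj.
  have kj' : (k < j)%N by rewrite ltn_neqAle eq_sym ne kj.
  by have := hw j kj'; rewrite mnmDE => /eqP; rewrite addn_eq0 => /andP [/eqP].
- split.
    rewrite mcoeff_msupp qcE /m0 mnmBE DU_E eqxx mul1n subnn eqxx -em.
    by rewrite -mcoeff_msupp.
  move=> w; rewrite mcoeff_msupp qcE; case: ifP => [/eqP wv0|]; last by rewrite eqxx.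
  rewrite -mcoeff_msupp => /hl; rewrite {1}em addmC [(m0 + _)%MM]addmC lexle_add.
  by [].
- apply/forallP => j; move/forallP: hB => /(_ j); rewrite /m0 mnmBE.
  by move=> h; apply: leq_trans h; apply: leq_subr.
Qed.

End Z.

Section RA.
Variables (K : fieldType) (n : nat).
Implicit Types (m w : 'X_{1..n}) (p q : {mpoly K[n]}).

Lemma meval_msym (s : 'S_n) p (v : 'I_n -> K) :
  (msym s p).@[v] = p.@[fun i => v (s i)].
Proof.
rewrite {1}(mpolyE p) (big_morph _ (@msymD _ _ s) (@msym0 _ _ s)) (big_morph _ (@mevalD _ _ v) (@meval0 _ _ v)).
rewrite [RHS]mevalE; apply: eq_bigr => m _.
rewrite msymZ mevalZ msymX mevalX; congr (_ * _).
rewrite (reindex_inj (@perm_inj _ s)) /=; apply: eq_bigr => i _.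
by rewrite mnmE permK.
Qed.

Definition Pb (b : 'I_n -> nat) m : Prop := forall i, (m i <= b i)%N.

Lemma suppM_b p q b1 b2 : supp_in (Pb b1) p -> supp_in (Pb b2) q ->
  supp_in (Pb (fun i => b1 i + b2 i)%N) (p * q).
Proof.
move=> hp hq m /msuppM_le /allpairsP [[m1 m2] /= [h1 h2 ->]] i.
by rewrite mnmDE leq_add // ?(hp _ h1 i) ?(hq _ h2 i).
Qed.

Lemma supp_prod_b (I : Type) (r : seq I) (P : pred I) (F : I -> {mpoly K[n]})
  (b : I -> 'I_n -> nat) : (forall x, P x -> supp_in (Pb (b x)) (F x)) ->
  supp_in (Pb (fun i => \sum_(x <- r | P x) b x i)%N) (\prod_(x <- r | P x) F x).
Proof.
move=> hF; elim: r => [|x r IH].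
  rewrite big_nil -mpolyX0; apply: supp_inX => i; by rewrite big_nil mnm0E.
rewrite big_cons; case hx: (P x).
  apply: supp_in_mono (suppM_b (hF x hx) IH) => m h i.
  by rewrite big_cons hx; apply: h.
by apply: supp_in_mono IH => m h i; rewrite big_cons hx; apply: h.
Qed.

Lemma factor_supp (i : 'I_n) (c : K) :
  supp_in (Pb (fun l => (l == i : nat))) ('X_i - c%:MP).
Proof.
move=> m; rewrite mcoeff_msupp mcoeffB mcoeffX mcoeffC.
case: (eqVneq U_(i)%MM m) => [<- _ l|ne]; first by rewrite mnm1E eq_sym.
case: (eqVneq m 0%MM) => [-> _ l|_]; first by rewrite mnm0E.
by rewrite mulr0 subrr eqxx.
Qed.

Variable A : seq K.
Hypothesis hA : uniq A.
Hypothesis hnd : (n <= size A)%N.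
Local Notation d := (size A).

Lemma num_supp (S : {set 'I_d}) : #|S| = n ->
  supp_in (fun m => inB d m) (lagrange_num n S).
Proof.
move=> cS.
have h := @supp_prod_b 'I_n (index_enum 'I_n) xpredT
  (fun i => \prod_(j in ~: S) ('X_i - (nth 0 A j)%:MP))
  (fun i l => \sum_(j in ~: S) (l == i : nat))%N
  (fun i _ => @supp_prod_b 'I_d (index_enum 'I_d) (fun j => j \in ~: S) _
     (fun j l => (l == i : nat)) (fun j _ => @factor_supp i (nth 0 A j))).
move=> m /h hm; apply/forallP => l; have := hm l.
rewrite /=.
have -> : (\sum_(i < n) \sum_(j in ~: S) (l == i : nat))%N = #|~: S|.
  under eq_bigr do rewrite sum_nat_const.
  rewrite (bigD1 l) //= eqxx muln1 big1 ?addn0 // => i ne.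
  by rewrite eq_sym (negbTE ne) muln0.
have := cardsC S; rewrite card_ord cS => hc h'.
have hl := ltn_ord l; lia.
Qed.

Lemma rA_supp h : supp_in (fun m => inB d m) (rA A h).
Proof.
apply: supp_in_sum => S /eqP cS; apply: supp_inZ; exact: num_supp.
Qed.

Lemma rA_eval h (a : 'I_n -> K) : h \is symmetric -> in_Vn A a ->
  (rA A h).@[a] = h.@[a].
Proof.
move=> hs [haA hinj].
have hidx : forall i, (index (a i) A < d)%N by move=> i; rewrite index_mem.
pose idx := fun i => Ordinal (hidx i).
have nidx : forall i, nth 0 A (idx i) = a i by move=> i; rewrite /= nth_index.
have idx_inj : injective idx by move=> i j e; apply: hinj; rewrite -nidx e nidx.
set Sa := idx @: [set: 'I_n].
have cSa : #|Sa| = n by rewrite card_imset // cardsT card_ord.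
have memSa : forall j, j \in Sa -> exists i, j = idx i.
  by move=> j /imsetP [i _ ->]; exists i.
have numE : forall S : {set 'I_d}, (lagrange_num n S).@[a] =
    \prod_(i < n) \prod_(j in ~: S) (a i - nth 0 A j).
  move=> S; rewrite /lagrange_num (big_morph _ (@mevalM _ _ a) (@meval1 _ _ a)).
  apply: eq_bigr => i _; rewrite (big_morph _ (@mevalM _ _ a) (@meval1 _ _ a)).
  by apply: eq_bigr => j _; rewrite mevalB mevalXU mevalC.
rewrite /rA (big_morph _ (@mevalD _ _ a) (@meval0 _ _ a)).
rewrite (bigD1 Sa) /=; last by rewrite cSa.
rewrite big1 ?addr0.
  rewrite mevalZ numE.
  have -> : \prod_(i < n) \prod_(j in ~: Sa) (a i - nth 0 A j) = lagrange_den Sa.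
    rewrite /lagrange_den {2}/Sa big_imset /=; last by move=> x y _ _; apply: idx_inj.
    apply: eq_big => [i|i _]; first by rewrite inE.
    by apply: eq_bigr => j _; rewrite nidx.
  have den0 : lagrange_den Sa != 0.
    apply/prodf_neq0 => j jS; apply/prodf_neq0 => j' j'S.
    rewrite subr_eq0 nth_uniq //; apply/negP => /eqP /val_inj ejj.
    by move: j'S; rewrite -ejj inE jS.
  rewrite mulfVK //.
  set L := [seq nth (0 : K) A j | j : 'I_d <- enum Sa].
  have sL : size L = n by rewrite size_map -cardE cSa.
  have uL : uniq L.
    rewrite map_inj_in_uniq ?enum_uniq // => j j' _ _ /eqP.
    by rewrite nth_uniq // => /eqP /val_inj.
  have ex : forall i : 'I_n, exists i', a i' == subset_pt Sa i.
    move=> i; have : nth 0 L i \in L by rewrite mem_nth // sL.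
    move=> /mapP [j]; rewrite mem_enum => /memSa [i' ->] e.
    by exists i'; rewrite /subset_pt -/L e nidx.
  pose sig := fun i => odflt i [pick i' | a i' == subset_pt Sa i].
  have hsig : forall i, a (sig i) = subset_pt Sa i.
    move=> i; rewrite /sig; case: pickP => [i' /eqP //|none].
    by have [i' hi'] := ex i; rewrite none in hi'.
  have sig_inj : injective sig.
    move=> i j e; have := hsig i; rewrite e hsig /subset_pt -/L => /eqP.
    by rewrite nth_uniq ?sL // => /eqP /val_inj.
  pose s := perm sig_inj.
  have -> : h.@[subset_pt Sa] = h.@[fun i => a (s i)].
    by apply: meval_eq => i /=; rewrite permE hsig.
  by rewrite -meval_msym (issymP _ hs).
move=> S /andP [/eqP cS ne]; rewrite mevalZ numE.
have [i hi] : exists i, idx i \notin S.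
  apply/existsP; rewrite -negb_forall; apply: contra ne => /forallP hall.
  rewrite eq_sym eqEcard cS cSa leqnn andbT; apply/subsetP => j /memSa [i ->].
  exact: hall.
rewrite (bigD1 i) //= (bigD1 (idx i)) /=; last by rewrite inE.
by rewrite nidx subrr !mul0r mulr0.
Qed.

End RA.

Unset Implicit Arguments.

Theorem proposition2p1 (K : fieldType) (n : nat) (A : seq K)
  (hA : uniq A) (hn1 : (1 <= n)%N) (hnd : (n <= size A)%N) :
  let d := size A in
  let I := @vanishing_ideal K n A in
  let G := @gpoly K n A in
  (* (1) *)
  (groebner_basis G I /\
   (forall m : 'X_{1..n}, in_normal_set I m <-> inB d m) /\
   (forall p : {mpoly K[n]}, exists q : {mpoly K[n]},
       (forall m, m \in msupp q -> inB d m) /\ I (p - q)) /\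
   (forall q : {mpoly K[n]},
       (forall m, m \in msupp q -> inB d m) -> I q -> q = 0)) /\
  (* (2) *)
  (forall h : {mpoly K[n]}, h \is symmetric -> is_normal_form G h (rA A h)).
Proof.
move=> d I G.
have hGI : forall i, I (G i) by move=> i; apply: G_in_I.
have ideal_sub : forall p, in_ideal G p -> I p.
  move=> p [c ->] a ha; rewrite (big_morph _ (@mevalD _ _ a) (@meval0 _ _ a)).
  by rewrite big1 // => i _; rewrite mevalM (hGI i a ha) mulr0.
have IB : forall p q, I p -> I q -> I (p - q).
  by move=> p q hp hq a ha; rewrite mevalB hp // hq // subrr.
have Zc : forall p, I p -> p != 0 -> ~~ inB d (lexlead p).
  move=> p Ip p0; apply/negP => hB.
  apply: (Zmain hA hnd (leqnn n) _ _ (lexlead_spec p0) hB).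
    by move=> w _ j; rewrite leqNgt ltn_ord.
  by move=> a haA hainj; apply: Ip; split => [j|j j' e]; [apply: haA | apply: hainj].
have id : forall i : 'I_n, (i <= d)%N.
  by move=> i; apply: ltnW; apply: leq_trans (ltn_ord i) hnd.
have lead_G : forall i : 'I_n, lexlead (G i) = (U_(i) *+ (d - i))%MM.
  move=> i; apply: is_lead_lexlead; have := @lead_Xg K n A i 0%MM (id i).
  by rewrite mpolyX0 mul1r add0m.
have ndiv : forall m i, inB d m -> ~~ mdivides (lexlead (G i)) m.
  move=> m i /forallP /(_ i) hB; rewrite lead_G; apply/negP => /forallP /(_ i).
  rewrite DU_E eqxx mul1n => h; have := ltn_ord i; have := leq_trans h hB.
  by have := id i; lia.
have notB : forall m, ~~ inB d m -> exists i : 'I_n, (d - i <= m i)%N.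
  move=> m; rewrite negb_forall => /existsP [i hi]; exists i; lia.
have div_of_notB : forall m, ~~ inB d m -> exists i, mdivides (lexlead (G i)) m.
  move=> m /notB [i hi]; exists i; rewrite lead_G; apply/forallP => j; rewrite DU_E.
  by case: eqVneq => [<-|] //=; rewrite mul1n.
have suppB0 : forall q : {mpoly K[n]},
    (forall m, m \in msupp q -> inB d m) -> I q -> q = 0.
  move=> q hq Iq; case: (eqVneq q 0) => // q0.
  have := Zc q Iq q0; rewrite hq //; exact: (lexlead_spec q0).1.
split; first split.
- split; first exact: hGI.
  by move=> p Ip p0; apply: div_of_notB; apply: Zc.
- split.
    move=> m; split.
      move=> hN; case hB: (inB d m) => //; exfalso; apply: hN.
      have [i hi] := notB m (negbT hB).
      set u := (m - U_(i) *+ (d - i))%MM.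
      have em : (u + U_(i) *+ (d - i))%MM = m.
        rewrite /u submK //; apply/mnm_lepP => j; rewrite DU_E.
        by case: eqVneq => [<-|] //=; rewrite mul1n.
      have hl := @lead_Xg K n A i u (id i).
      exists ('X_[u] * G i); split; last split.
      + by move=> a ha; rewrite mevalM (hGI i a ha) mulr0.
      + by apply: contraTneq hl.1 => ->; rewrite msupp0.
      + by rewrite -em; apply: is_lead_lexlead.
    by move=> hB [p [Ip [p0 lp]]]; have := Zc p Ip p0; rewrite lp hB.
  split; last exact: suppB0.
  move=> p; have [r [hr hi]] := reduce hnd p.
  by exists r; split => //; apply: ideal_sub.
move=> h hs.
have Ihr : I (h - rA A h).
  by move=> a ha; rewrite mevalB (rA_eval hA hs ha) subrr.
have [r [hr hi]] := reduce hnd (h - rA A h).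
have r0 : r = 0.
  apply: suppB0 => //.
  have -> : r = (h - rA A h) - ((h - rA A h) - r) by rewrite opprB addrC subrK.
  by apply: IB => //; apply: ideal_sub.
split; first by rewrite r0 subr0 in hi.
move=> m hm i; apply: ndiv; exact: (rA_supp hA hnd hm).
Qed.
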